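(* Let $\mathcal{A}$ be a dual Banach algebra and let $\varphi$ be a weak$^*$-continuous character on $\mathcal{A}$. If $\mathcal{A}$ is Johnson pseudo-Connes amenable, then $\mathcal{A}$ is $\varphi$-Connes amenable.
   Context: A dual Banach algebra is a Banach algebra $\mathcal{A}$ together with a closed $\mathcal{A}$-submodule $\mathcal{A}_*$ of $\mathcal{A}^*$ such that $\mathcal{A}=(\mathcal{A}_* )^*$. For a bimodule $E$, $\sigma wc(E)$ is the set of $x\in E$ for which $a\mapsto a\cdot x$, $a\mapsto x\cdot a$ are weak$^*$-weak continuous. For a weak$^*$-continuous character $\varphi$, $\mathcal{A}$ is $\varphi$-Connes amenable if there is a bounded linear functional $m$ on $\sigma wc(\mathcal{A}^* )$ with $m(\varphi)=1$ and $m(f\cdot a)=\varphi(a)m(f)$ for all $a\in\mathcal{A}$, $f\in\sigma wc(\mathcal{A}^* )$. $\mathcal{A}\hat{\otimes}\mathcal{A}$ has actions $a\cdot(b\otimes c)=ab\otimes c$, $(b\otimes c)\cdot a=b\otimes ca$; duals carry the dual actions. $\pi_{\mathcal{A}}$ is the multiplication map $\mathcal{A}\hat{\otimes}\mathcal{A}\to\mathcal{A}$, $i_{\mathcal{A}_*}:\mathcal{A}_*\hookrightarrow\mathcal{A}^*$ the canonical embedding. $\mathcal{A}$ is Johnson pseudo-Connes amenable if there is a (not necessarily bounded) net $(m_\alpha)$ in $(\mathcal{A}\hat{\otimes}\mathcal{A})^{**}$ with $\langle T,a\cdot m_\alpha\rangle=\langle T,m_\alpha\cdot a\rangle$ for all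 $a\in\mathcal{A}$, $T\in\sigma wc((\mathcal{A}\hat{\otimes}\mathcal{A})^* )$, $\alpha$, and $i_{\mathcal{A}_*}^*\pi_{\mathcal{A}}^{**}(m_\alpha)a\to a$ for every $a\in\mathcal{A}$. *)

(* Defs.v *)
From HB Require Import structures.
From mathcomp Require Import all_boot all_order all_algebra.
From mathcomp Require Import complex.
From mathcomp Require Import all_classical all_reals all_analysis.
Import numFieldTopology.Exports numFieldNormedType.Exports.
Set Implicit Arguments. Unset Strict Implicit. Unset Printing Implicit Defensive.
Import Order.TTheory GRing.Theory Num.Theory.
Local Open Scope ring_scope.
Local Open Scope complex_scope.
Local Open Scope classical_set_scope.

Section DualBanach.
Variables (R : realType) (A : completeNormedModType R[i]).
Local Notation C := (R[i]).
Variable mul : A -> A -> A.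

Definition banach_algebra : Prop :=
  (forall (k : C) x y z, mul (k *: x + y) z = k *: mul x z + mul y z) /\
  (forall (k : C) x y z, mul z (k *: x + y) = k *: mul z x + mul z y) /\
  (forall x y z, mul x (mul y z) = mul (mul x y) z) /\
  (forall x y, `|mul x y| <= `|x| * `|y|).

Definition lin_fun (f : A -> C) : Prop :=
  forall (k : C) x y, f (k *: x + y) = k * f x + f y.
Definition opbound (f : A -> C) (c : C) : Prop := forall a, `|f a| <= c * `|a|.
Definition dual_elt (f : A -> C) : Prop := lin_fun f /\ exists c, opbound f c.

Definition lact (a : A) (f : A -> C) : A -> C := fun b => f (mul b a).
Definition ract (f : A -> C) (a : A) : A -> C := fun b => f (mul a b).

Definition dual_on (S : (A -> C) -> Prop) (Phi : (A -> C) -> C) : Prop :=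
  (forall (k : C) f g, S f -> S g ->
      Phi (fun x => k * f x + g x) = k * Phi f + Phi g) /\
  exists c : C, forall f (d : C), S f -> 0 <= d -> opbound f d -> `|Phi f| <= c * d.

Definition dual_banach_algebra (Apre : (A -> C) -> Prop) : Prop :=
  banach_algebra /\
  (forall f, Apre f -> dual_elt f) /\
  Apre (fun _ => 0) /\
  (forall (k : C) f g, Apre f -> Apre g -> Apre (fun x => k * f x + g x)) /\
  (forall f, dual_elt f ->
     (forall e : C, 0 < e -> exists g, Apre g /\ opbound (fun x => f x - g x) e) ->
     Apre f) /\
  (forall a f, Apre f -> Apre (lact a f) /\ Apre (ract f a)) /\
  (* the canonical map A -> (A_* )^*, a |-> (f |-> f a), is an isometry ... *)
  (forall a (e : C), 0 < e ->
     exists f, Apre f /\ opbound f 1 /\ `|a| - e <= `|f a|) /\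
  (* ... onto (A_* )^* *)
  (forall Phi, dual_on Apre Phi -> exists a, forall f, Apre f -> Phi f = f a).

(** weak*-continuity (topology sigma(A, A_* )) of a map g : A -> C:
    convergence characterisation of continuity for the initial topology. *)
Definition wstar_cont (Apre : (A -> C) -> Prop) (g : A -> C) : Prop :=
  forall (F : set_system A) (a : A), Filter F ->
    (forall f, Apre f -> (f @ F) --> (f a : C^o)) -> (g @ F) --> (g a : C^o).

Definition wstar_character (Apre : (A -> C) -> Prop) (phi : A -> C) : Prop :=
  lin_fun phi /\ (forall a b, phi (mul a b) = phi a * phi b) /\
  (exists a, phi a != 0) /\ wstar_cont Apre phi.

(** sigma wc(A^* ): f in A^* with a |-> a.f, a |-> f.a weak*-weak continuous,
    the weak topology on A^* being sigma(A^*, A^** ). *)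
Definition swc_dual (Apre : (A -> C) -> Prop) (f : A -> C) : Prop :=
  dual_elt f /\
  forall Phi, dual_on dual_elt Phi ->
    wstar_cont Apre (fun a => Phi (lact a f)) /\
    wstar_cont Apre (fun a => Phi (ract f a)).

Definition phi_connes_amenable (Apre : (A -> C) -> Prop) (phi : A -> C) : Prop :=
  exists m : (A -> C) -> C,
    dual_on (swc_dual Apre) m /\ m phi = 1 /\
    forall a f, swc_dual Apre f -> m (ract f a) = phi a * m f.

(** ---- (A ⊗^ A)^* identified with bounded bilinear forms on A x A ---- *)
Definition bil_elt (T : A -> A -> C) : Prop :=
  (forall (k : C) x y z, T (k *: x + y) z = k * T x z + T y z) /\
  (forall (k : C) x y z, T z (k *: x + y) = k * T z x + T z y) /\
  exists c : C, forall x y, `|T x y| <= c * `|x| * `|y|.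
Definition bilbound (T : A -> A -> C) (c : C) : Prop :=
  forall x y, `|T x y| <= c * `|x| * `|y|.

(* dual actions: <a.T, u> = <T, u.a>, <T.a, u> = <T, a.u>, where
   a.(b (x) c) = ab (x) c and (b (x) c).a = b (x) ca *)
Definition blact (a : A) (T : A -> A -> C) : A -> A -> C := fun b c => T b (mul c a).
Definition bract (T : A -> A -> C) (a : A) : A -> A -> C := fun b c => T (mul a b) c.

(* (A ⊗^ A)^** : bounded linear functionals on the bounded bilinear forms *)
Definition bidual_elt (m : (A -> A -> C) -> C) : Prop :=
  (forall (k : C) S T, bil_elt S -> bil_elt T ->
      m (fun x y => k * S x y + T x y) = k * m S + m T) /\
  exists c : C, forall T (d : C), bil_elt T -> 0 <= d -> bilbound T d -> `|m T| <= c * d.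

Definition swc_bil (Apre : (A -> C) -> Prop) (T : A -> A -> C) : Prop :=
  bil_elt T /\
  forall Psi, bidual_elt Psi ->
    wstar_cont Apre (fun a => Psi (blact a T)) /\
    wstar_cont Apre (fun a => Psi (bract T a)).

Definition pi_star (f : A -> C) : A -> A -> C := fun b c => f (mul b c).

Definition directed (I : Type) (le : I -> I -> Prop) : Prop :=
  (exists i : I, True) /\ (forall i, le i i) /\
  (forall i j k, le i j -> le j k -> le i k) /\
  (forall i j, exists k, le i k /\ le j k).
Definition net_cvg (I : Type) (le : I -> I -> Prop) (x : I -> A) (y : A) : Prop :=
  forall e : C, 0 < e -> exists i0, forall i, le i0 i -> `|x i - y| < e.

(** Johnson pseudo-Connes amenability.  e i is the element of A = (A_* )^*
    equal to i_{A_*}^* pi^** (m i), i.e. f (e i) = <pi^** (m i), f> = m i (pi^* f)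
    for f in A_*. *)
Definition johnson_pseudo_connes_amenable (Apre : (A -> C) -> Prop) : Prop :=
  exists (I : Type) (le : I -> I -> Prop) (m : I -> (A -> A -> C) -> C) (e : I -> A),
    directed le /\
    (forall i, bidual_elt (m i)) /\
    (* <T, a.m> = <T, m.a> for T in sigma wc *)
    (forall i a T, swc_bil Apre T -> m i (bract T a) = m i (blact a T)) /\
    (forall i f, Apre f -> f (e i) = m i (pi_star f)) /\
    (forall a, net_cvg le (fun i => mul (e i) a) a).

End DualBanach.

(* Main.v *)
Require Import Defs.
From HB Require Import structures.
From mathcomp Require Import all_boot all_order all_algebra.
From mathcomp Require Import complex.
From mathcomp Require Import all_classical all_reals all_analysis.
From mathcomp Require Import ring.
Import numFieldTopology.Exports numFieldNormedType.Exports.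
Import Order.TTheory GRing.Theory Num.Theory.
Local Open Scope ring_scope.
Local Open Scope complex_scope.
Local Open Scope classical_set_scope.
Set Implicit Arguments. Unset Strict Implicit. Unset Printing Implicit Defensive.

Lemma lin0 (R : realType) (A : completeNormedModType R[i]) (f : A -> R[i]) :
  lin_fun f -> f 0 = 0.
Proof.
move=> lf; have := lf 1 0 0; rewrite scale1r addr0 mul1r -{1}[f 0]add0r.
by move/addIr.
Qed.

Lemma linZ (R : realType) (A : completeNormedModType R[i]) (f : A -> R[i]) k x :
  lin_fun f -> f (k *: x) = k * f x.
Proof. by move=> lf; have := lf k x 0; rewrite addr0 (lin0 lf) addr0. Qed.

Lemma linB (R : realType) (A : completeNormedModType R[i]) (f : A -> R[i]) x y :
  lin_fun f -> f (x - y) = f x - f y.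
Proof.
by move=> lf; have := lf (-1) y x; rewrite scaleN1r mulN1r addrC => ->; rewrite addrC.
Qed.

Fixpoint allP (R : realType) (A : completeNormedModType R[i]) (P : (A -> R[i]) -> Prop)
  (S : seq (A -> R[i])) : Prop :=
  if S is f :: S' then P f /\ allP P S' else True.
Fixpoint vanish (R : realType) (A : completeNormedModType R[i])
  (S : seq (A -> R[i])) (x : A) : Prop :=
  if S is f :: S' then f x = 0 /\ vanish S' x else True.

Lemma span_in (R : realType) (A : completeNormedModType R[i]) (P : (A -> R[i]) -> Prop) :
  P (fun _ => 0) ->
  (forall (k : R[i]) f g, P f -> P g -> P (fun x => k * f x + g x)) ->
  forall S, allP (fun f => P f /\ lin_fun f) S ->
  forall phi, lin_fun phi -> (forall x, vanish S x -> phi x = 0) -> P phi.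
Proof.
move=> P0 Pc; elim=> [|f S IH] /=.
  move=> _ phi _ h; have -> : phi = (fun _ => 0) by apply: funext => x; exact: h.
  exact: P0.
move=> [[Pf lf] aS] phi lphi h.
have [c0|] := pselect (forall x, vanish S x -> f x = 0).
  by apply: IH => // x vx; apply: h; split => //; apply: c0.
move=> /existsNP [x0 /not_implyP [vx0 /eqP fx0]].
pose c := phi x0 / f x0.
pose psi := fun x => (- c) * f x + phi x.
have lpsi : lin_fun psi.
  by move=> k x y; rewrite /psi lf lphi; ring.
have Ppsi : P psi.
  apply: IH => // x vx.
  pose y := x - (f x / f x0) *: x0.
  have vy : vanish S y.
    move: aS vx vx0; rewrite /y; elim: (S) {h} => //= g S' IH' [[_ lg] aS'] [gx vx] [gx0 vx0].
    by split; [rewrite linB // linZ // gx gx0; ring | apply: IH'].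
  have fy : f y = 0 by rewrite /y linB // linZ // divfK ?subrr.
  have := h y (conj fy vy); rewrite /y linB // linZ // /psi /c => /eqP.
  rewrite subr_eq0 => /eqP ->; rewrite /c; field.
  exact: fx0.
have -> : phi = (fun x => c * f x + psi x).
  by apply: funext => x; rewrite /psi; ring.
exact: Pc.
Qed.

Lemma vanish_cat (R : realType) (A : completeNormedModType R[i]) S S' (x : A) :
  vanish (S ++ S') x <-> vanish S x /\ vanish S' x.
Proof. elim: S => //= [|f S IH]; first by split=> // -[]. by rewrite IH; tauto. Qed.

Lemma allP_cat (R : realType) (A : completeNormedModType R[i]) P (S S' : seq (A -> R[i])) :
  allP P (S ++ S') <-> allP P S /\ allP P S'.
Proof. elim: S => //= [|f S IH]; first by split=> // -[]. by rewrite IH; tauto. Qed.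

Lemma wstar_in (R : realType) (A : completeNormedModType R[i]) (Apre : (A -> R[i]) -> Prop)
  (phi : A -> R[i]) :
  Apre (fun _ => 0) ->
  (forall (k : R[i]) f g, Apre f -> Apre g -> Apre (fun x => k * f x + g x)) ->
  (forall f, Apre f -> lin_fun f) -> lin_fun phi -> wstar_cont Apre phi -> Apre phi.
Proof.
move=> P0 Pc Plin lphi wc.
have [[S [aS hS]]|nQ] := pselect (exists S, allP (fun f => Apre f /\ lin_fun f) S /\
   forall x, vanish S x -> phi x != 1).
  apply: (span_in P0 Pc aS lphi) => x vx.
  apply/eqP; apply/negP => /negP nz.
  suff v : vanish S ((phi x)^-1 *: x) by move: (hS _ v); rewrite linZ // mulVf // eqxx.
  move: aS vx; elim: (S) {hS} => //= g S' IH [[_ lg] aS] [gx vx].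
  by rewrite linZ // gx mulr0; split => //; apply: IH.
pose F : set_system A := fun U => exists S, allP (fun f => Apre f /\ lin_fun f) S /\
   forall x, vanish S x -> phi x = 1 -> U x.
have FF : Filter F.
  constructor.
  - by exists [::].
  - move=> U V [S [aS hS]] [S' [aS' hS']]; exists (S ++ S'); split.
      by apply/allP_cat.
    by move=> x /vanish_cat [v1 v2] px; split; [apply: hS|apply: hS'].
  - by move=> U V UV [S [aS hS]]; exists S; split => // x vx px; apply: UV; apply: hS.
have hf : forall f, Apre f -> (f @ F) --> (f 0 : R[i]^o).
  move=> f Af V nV; exists [:: f]; split; first by do !split => //; exact: Plin.
  move=> x [fx _] _; rewrite /= fx; have f0 := lin0 (Plin _ Af); rewrite f0 in nV; exact: nbhs_singleton nV.
have := wc F 0 FF hf.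
move/(_ (ball (phi 0 : R[i]^o) 1) (nbhsx_ballx _ _ ltr01)) => [S [aS hS]].
have [x [vx px]] : exists x, vanish S x /\ phi x = 1.
  apply: contrapT => nx; apply: nQ; exists S; split => // x vx; apply/eqP => px.
  by apply: nx; exists x.
have := hS x vx px; rewrite /ball /= lin0 // px sub0r normrN normr1 ltxx.
by [].
Qed.

Lemma opbound_norm (R : realType) (A : completeNormedModType R[i]) (f : A -> R[i]) c :
  opbound f c -> opbound f `|c|.
Proof.
move=> h a; have := h a; move=> le1.
have c0 : 0 <= c * `|a| by apply: le_trans le1.
by rewrite -(ger0_norm c0) normrM normr_id in le1.
Qed.

Lemma bil0 (R : realType) (A : completeNormedModType R[i]) :
  bil_elt (fun (_ _ : A) => (0 : R[i])).
Proof.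
split; [by move=> *; rewrite mulr0 addr0|split; [by move=> *; rewrite mulr0 addr0|]].
by exists 0 => x y; rewrite normr0 !mul0r.
Qed.

Lemma bidual0 (R : realType) (A : completeNormedModType R[i]) Psi :
  bidual_elt (A:=A) Psi -> Psi (fun _ _ => 0) = 0.
Proof.
move=> [lin _]; have := lin 1 _ _ (@bil0 R A) (@bil0 R A).
rewrite mul1r; set g := (fun x y => _).
have -> : g = (fun _ _ => 0) by apply: funext => x; apply: funext => y; rewrite /g addr0.
rewrite mul1r => h; apply: (@addIr _ (Psi (fun _ _ => 0))).
by rewrite add0r -h.
Qed.

Lemma bidualZ (R : realType) (A : completeNormedModType R[i]) Psi (k : R[i]) S :
  bidual_elt (A:=A) Psi -> bil_elt S -> Psi (fun x y => k * S x y) = k * Psi S.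
Proof.
move=> hP bS; have := hP.1 k _ _ bS (@bil0 R A); rewrite bidual0 // addr0.
set g := (fun x y => _).
by have -> : g = (fun x y => k * S x y) by apply: funext => x; apply: funext => y; rewrite /g addr0.
Qed.

Unset Implicit Arguments.

Theorem proposition2p7 (R : realType) (A : completeNormedModType R[i])
  (mul : A -> A -> A) (Apre : (A -> R[i]) -> Prop) (phi : A -> R[i]) :
  dual_banach_algebra mul Apre ->
  wstar_character mul Apre phi ->
  johnson_pseudo_connes_amenable mul Apre ->
  phi_connes_amenable mul Apre phi.
Proof.
move=> [BA [Pdual [P0 [Pc [Pcl [Pmod [Piso Ponto]]]]]]] [lphi [mphi [[a0 pa0] wphi]]].
move=> [I [le [m [e [[[i0 _] [lrefl _]] [mbid [mcomm [me ecvg]]]]]]]].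
have Plin : forall f, Apre f -> lin_fun f by move=> f /Pdual [].
have Aphi := wstar_in P0 Pc Plin lphi wphi.
have [_ [cp0 bphi0]] := Pdual phi Aphi.
have bphi := opbound_norm bphi0; set cp := `|cp0| in bphi.
have cp_ge0 : 0 <= cp by apply: normr_ge0.
have [i pei] : exists i, phi (e i) != 0.
  apply: contrapT => H.
  have H' : forall i, phi (e i) = 0.
    by move=> i; apply: contrapT => /eqP ne; apply: H; exists i.
  have pa0p : 0 < `|phi a0| by rewrite normr_gt0.
  pose eps := `|phi a0| / (cp + 1).
  have cp1 : 0 < cp + 1 by apply: ltr_wpDl => //; exact: ltr01.
  have epos : 0 < eps by apply: divr_gt0.
  have [j hj] := ecvg a0 eps epos.
  have lt := hj j (lrefl j).
  have : `|phi a0| <= cp * eps.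
    have := bphi (mul (e j) a0 - a0).
    rewrite linB // mphi H' mul0r sub0r normrN => h.
    apply: le_trans h _; apply: ler_wpM2l => //; exact: ltW.
  have : cp * eps < `|phi a0|.
    have -> : `|phi a0| = (cp + 1) * eps by rewrite mulrC /eps divfK // lt0r_neq0.
    by rewrite ltr_pM2r // ltrDl ltr01.
  by move=> /lt_le_trans h /h; rewrite ltxx.
pose T := fun (f : A -> R[i]) (b c : A) => f b * phi c.
have bilbT : forall f d, opbound f d -> 0 <= d -> bilbound (T f) (d * cp).
  move=> f d bf d0 x y; rewrite /T normrM.
  apply: le_trans (ler_pM _ _ (bf x) (bphi y)) _ => //.
  by rewrite le_eqVlt; apply/orP; left; apply/eqP; ring.
have bilT : forall f, dual_elt f -> bil_elt (T f).
  move=> f [lf [cf bf]]; split; first by move=> k x y z; rewrite /T lf; ring.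
  split; first by move=> k x y z; rewrite /T lphi; ring.
  by exists (`|cf| * cp); apply: bilbT; [exact: opbound_norm | exact: normr_ge0].
have blT : forall f a, dual_elt f -> forall Psi, bidual_elt Psi ->
    Psi (blact mul a (T f)) = phi a * Psi (T f).
  move=> f a df Psi bPsi; rewrite -bidualZ //; last exact: bilT.
  by congr Psi; apply: funext => b; apply: funext => c; rewrite /blact /T mphi; ring.
have swcT : forall f, swc_dual mul Apre f -> swc_bil mul Apre (T f).
  move=> f [df sf]; split; first exact: bilT.
  move=> Psi bPsi; split.
    have -> : (fun a => Psi (blact mul a (T f))) = (fun a => phi a * Psi (T f)).
      by apply: funext => a; apply: blT.
    by move=> F a FF h; apply: cvgMr_tmp; exact: wphi.
  pose Phi := fun g => Psi (T g).
  have dPhi : dual_on (@dual_elt R A) Phi.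
    split.
      move=> k g h dg dh; rewrite /Phi -bPsi.1; try exact: bilT.
      by congr Psi; apply: funext => b; apply: funext => c; rewrite /T; ring.
    have [cPsi hc] := bPsi.2.
    exists (cPsi * cp) => g d dg d0 bg; rewrite /Phi.
    apply: le_trans (hc _ _ (bilT _ dg) _ (bilbT _ _ bg d0)) _.
      exact: mulr_ge0.
    by rewrite le_eqVlt; apply/orP; left; apply/eqP; ring.
  by case: (sf Phi dPhi).
exists (fun f => m i (T f) / phi (e i)).
split.
  split.
    move=> k f g sfp sgp.
    have -> : T (fun x => k * f x + g x) = (fun x y => k * T f x y + T g x y).
      by apply: funext => b; apply: funext => c; rewrite /T; ring.
    rewrite (mbid i).1; [by rewrite mulrDl mulrA | exact: bilT sfp.1 | exact: bilT sgp.1].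
  have [cm hm] := (mbid i).2.
  exists (cm * cp / `|phi (e i)|) => f d sfp d0 bf.
  rewrite normrM normfV.
  apply: le_trans (ler_wpM2r _ (hm _ _ (bilT _ sfp.1) _ (bilbT _ _ bf d0))) _.
  - by rewrite invr_ge0 normr_ge0.
  - exact: mulr_ge0.
  by rewrite le_eqVlt; apply/orP; left; apply/eqP; ring.
split.
  have -> : T phi = pi_star mul phi.
    by apply: funext => b; apply: funext => c; rewrite /T /pi_star mphi.
  by rewrite -me // divff.
move=> a f sfp.
have -> : T (ract mul f a) = bract mul (T f) a by [].
rewrite mcomm; last exact: swcT.
by rewrite blT // ?mulrA //; exact: sfp.1.
Qed.
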